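(* Let $G=K_{r_1,\dots,r_k}$ with partition sets $X_1,\dots,X_k$ ($|X_i|=r_i$), and assume $|V(G)|$ is odd. Let $\mathcal X=\{X_1,\dots,X_k\}$. Then $G$ has a good bisection if and only if $\mathcal X$ has a good subset.
   Context: A bisection of a graph $G$ is a bipartite spanning subgraph $H$ of $G$ with partition sets $V_1,V_2$ (every edge of $H$ joins $V_1$ and $V_2$) with $||V_1|-|V_2||\le 1$. It is good if $2d_H(v)\ge d_G(v)-1$ for every $v\in V(G)$. Let $\mathcal S_1=\{X_i: |X_i| \text{ odd}\}$ and $\mathcal S_0=\{X_i:|X_i|\text{ even}\}$. For $\mathcal A\subseteq\mathcal X$ let $s(\mathcal A)=\sum_{X_i\in\mathcal A}|X_i|$. A subset $\mathcal A\subseteq\mathcal X$ is good if there exist $\mathcal A'\subseteq\mathcal A$ and an integer $n$ with $0\le n\le|\mathcal S_0\setminus\mathcal A|$ such that $s(\mathcal A')=s(\mathcal A)/2+(m+2n-1)/2$, where $m=|\mathcal S_1\setminus\mathcal A|$. *)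

(* Defs.v *)
From mathcomp Require Import all_boot.
Set Implicit Arguments. Unset Strict Implicit. Unset Printing Implicit Defensive.

(* Complete multipartite graph K_{r_1,...,r_k} on the finite vertex type T:
   the partition set X_i is the set of vertices v with part v = i, and two
   vertices are adjacent iff they lie in different partition sets. *)
Definition partset (T : finType) (k : nat) (part : T -> 'I_k) (i : 'I_k) : {set T} :=
  [set v | part v == i].

Definition cmp_adj (T : finType) (k : nat) (part : T -> 'I_k) : rel T :=
  fun x y => part x != part y.

Definition deg (T : finType) (e : rel T) (v : T) : nat := #|[set y | e v y]|.

(* H (edge relation h) is a bisection of G (edge relation g) with partition
   sets V1 and V2 = ~: V1 : a bipartite spanning subgraph of G (every edge of H
   is an edge of G and joins V1 and V2), with ||V1| - |V2|| <= 1. *)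
Definition is_bisection (T : finType) (g h : rel T) (V1 : {set T}) : Prop :=
  (forall x y, h x y = h y x) /\
  (forall x y, h x y -> g x y) /\
  (forall x y, h x y -> (x \in V1) != (y \in V1)) /\
  (#|V1| <= #|~: V1| + 1) /\ (#|~: V1| <= #|V1| + 1).

(* good: 2 d_H(v) >= d_G(v) - 1 for every vertex v (over the integers,
   i.e. 2 d_H(v) + 1 >= d_G(v)). *)
Definition good_bisection (T : finType) (g h : rel T) (V1 : {set T}) : Prop :=
  is_bisection g h V1 /\ (forall v, deg g v <= 2 * deg h v + 1).

Definition s_of (k : nat) (r : 'I_k -> nat) (A : {set 'I_k}) : nat :=
  \sum_(i in A) r i.

Definition S1 (k : nat) (r : 'I_k -> nat) : {set 'I_k} := [set i | odd (r i)].
Definition S0 (k : nat) (r : 'I_k -> nat) : {set 'I_k} := [set i | ~~ odd (r i)].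

(* A is good iff there are A' \subset A and n with 0 <= n <= |S_0 \ A| such
   that s(A') = s(A)/2 + (m + 2n - 1)/2, m = |S_1 \ A|.  Multiplying by 2
   (an exact equivalence over the rationals) this reads
   2 s(A') + 1 = s(A) + m + 2n, stated in nat. *)
Definition good_subset (k : nat) (r : 'I_k -> nat) (A : {set 'I_k}) : Prop :=
  exists (A' : {set 'I_k}) (n : nat),
    A' \subset A /\ n <= #|S0 r :\: A| /\
    2 * s_of r A' + 1 = s_of r A + #|S1 r :\: A| + 2 * n.

(* Main.v *)
Require Import Defs.
From mathcomp Require Import all_boot.
From mathcomp Require Import zify.

Lemma sum_cnt (T : finType) (k : nat) (part : T -> 'I_k) (B : {set T}) :
  \sum_(i < k) #|B :&: partset part i| = #|B|.
Proof.
rewrite -sum1_card (partition_big part predT) //=.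
apply: eq_bigr => i _; rewrite -sum1_card; apply: eq_bigl => v.
rewrite !inE /partset; by [].
Qed.

Lemma cnt_split (T : finType) (k : nat) (part : T -> 'I_k) (S : {set T}) i :
  #|S :&: partset part i| + #|~: S :&: partset part i| = #|partset part i|.
Proof.
rewrite -(cardsID S (partset part i)) [partset part i :&: S]setIC.
congr (_ + _); apply: eq_card => v; by rewrite !inE.
Qed.

Lemma degG (T : finType) (k : nat) (part : T -> 'I_k) v :
  deg (cmp_adj part) v = #|T| - #|partset part (part v)|.
Proof.
rewrite -(cardsC (partset part (part v))) addKn /deg.
apply: eq_card => y; by rewrite !inE /cmp_adj eq_sym.
Qed.

Lemma cardD_cnt (T : finType) (k : nat) (part : T -> 'I_k) (B : {set T}) i :
  #|B :\: partset part i| = #|B| - #|B :&: partset part i|.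
Proof. by rewrite -(cardsID (partset part i) B) addKn. Qed.

Lemma sum_if (k : nat) (A : {set 'I_k}) (F : 'I_k -> nat) :
  \sum_(i in A) F i = \sum_(i < k) (if i \in A then F i else 0).
Proof. by rewrite big_mkcond. Qed.

Lemma card_if (k : nat) (A : {set 'I_k}) :
  #|A| = \sum_(i < k) (if i \in A then 1 else 0).
Proof. by rewrite -sum1_card big_mkcond. Qed.

Lemma fwd (T : finType) (k : nat) (part : T -> 'I_k) (S : {set T}) (h : rel T) :
  2 * #|S| + 1 = #|T| ->
  (forall x y, h x y -> part x != part y) ->
  (forall x y, h x y -> (x \in S) != (y \in S)) ->
  (forall v, deg (cmp_adj part) v <= 2 * deg h v + 1) ->
  exists A : {set 'I_k}, good_subset (fun i : 'I_k => #|partset part i|) A.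
Proof.
move=> HS Hg Hc Hd.
set r := fun i : 'I_k => #|partset part i|.
set sc := fun i => #|S :&: partset part i|.
set lc := fun i => #|~: S :&: partset part i|.
have Hsl i : sc i + lc i = r i by exact: cnt_split.
have HSc : #|~: S| = #|S| + 1.
  have := cardsC S; lia.
have C1 i : 0 < lc i -> sc i <= lc i.
  rewrite /lc card_gt0 => /set0Pn [v]; rewrite !inE => /andP [vS /eqP pv].
  have := Hd v; rewrite degG pv.
  have : deg h v <= #|S :\: partset part i|.
    apply: subset_leq_card; apply/subsetP => y; rewrite !inE => hvy.
    have := Hg _ _ hvy; have := Hc _ _ hvy; rewrite (negbTE vS) pv /partset ?inE.
    by case: (y \in S) => // _; rewrite eq_sym => ->.
  rewrite cardD_cnt -/(sc i).
  have := cardsID (partset part i) S; rewrite -/(sc i).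
  have := Hsl i; rewrite /r. rewrite -/(lc i). lia.
have C2 i : 0 < sc i -> lc i <= sc i + 2.
  rewrite /sc card_gt0 => /set0Pn [v]; rewrite !inE => /andP [vS /eqP pv].
  have := Hd v; rewrite degG pv.
  have : deg h v <= #|~: S :\: partset part i|.
    apply: subset_leq_card; apply/subsetP => y; rewrite !inE => hvy.
    have := Hg _ _ hvy; have := Hc _ _ hvy; rewrite vS pv /partset ?inE.
    by case: (y \in S) => // _; rewrite eq_sym => ->.
  rewrite cardD_cnt -/(lc i).
  have := cardsID (partset part i) (~: S); rewrite -/(lc i).
  have := Hsl i; rewrite /r. rewrite -/(sc i). lia.
pose A := [set i | (sc i == 0) || (lc i == 0)].
pose A' := [set i | lc i == 0].
pose D := [set i | (i \notin A) && (lc i == sc i + 2)].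
exists A, A', #|D|; split; [|split].
- by apply/subsetP => i; rewrite !inE => ->; rewrite orbT.
- apply: subset_leq_card; apply/subsetP => i; rewrite !inE.
  case/andP => -> /eqP E /=; have := Hsl i; rewrite /r => <-; rewrite E.
  by rewrite addnA addnn oddD odd_double.
- rewrite /s_of !sum_if !card_if.
  have HN : \sum_(i < k) #|partset part i| = #|T|.
    by rewrite -cardsT -(sum_cnt _ _ part setT); apply: eq_bigr => i _; rewrite setTI.
  have HSs := sum_cnt _ _ part S.
  have E : \sum_(i < k) ((if i \in A' then r i else 0) * 2 + r i) =
           \sum_(i < k) ((if i \in A then r i else 0)
              + (if i \in S1 r :\: A then 1 else 0)
              + (if i \in D then 1 else 0) * 2 + sc i * 2).
    apply: eq_bigr => i _; rewrite !inE.
    have := Hsl i; have := C1 i; have := C2 i.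
    have := odd_double_half (#|partset part i|).
    case: (odd #|partset part i|) => /=;
    case: (sc i =P 0) => [->|s0]; case: (lc i =P 0) => [->|l0] /=;
      rewrite /r => oh c2 c1 e; try lia;
    case: (lc i =P sc i + 2) => /= [Hl|Hl]; lia.
  rewrite !big_split /= -!big_distrl /= in E.
  move: E HN HSs HS; rewrite /sc /r.
  set X1 := \sum_(i < k) _; set X2 := \sum_(i < k) _; set X3 := \sum_(i < k) _.
  set X4 := \sum_(i < k) _; set X5 := \sum_(i < k) _; set X6 := \sum_(i < k) _.
  lia.
Qed.

Lemma take_set_card (T : finType) (B : {set T}) c :
  c <= #|B| -> #|[set x in take c (enum B)]| = c.
Proof.
move=> hc; rewrite cardsE; move/card_uniqP: (take_uniq c (enum_uniq (mem B))) => ->.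
by rewrite size_takel // -cardE.
Qed.

Lemma bwd (T : finType) (k : nat) (part : T -> 'I_k)
  (Hnonempty : forall i : 'I_k, exists v : T, part v = i) (A : {set 'I_k}) :
  good_subset (fun i : 'I_k => #|partset part i|) A ->
  exists (h : rel T) (V1 : {set T}), good_bisection (cmp_adj part) h V1.
Proof.
set r := fun i : 'I_k => #|partset part i|.
case=> A' [n [sA' [hn Heq]]].
have rpos i : 0 < r i.
  have [v pv] := Hnonempty i; rewrite /r card_gt0; apply/set0Pn; exists v.
  by rewrite /partset inE pv.
pose D := [set i in take n (enum (S0 r :\: A))].
have cD : #|D| = n by exact: take_set_card.
have DE i : i \in D -> i \in S0 r :\: A.
  by rewrite inE => /mem_take; rewrite mem_enum.
pose c i := if i \in A' then r i else if i \in A then 0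
            else if i \in D then (r i)./2 - 1 else (r i)./2.
have cle i : c i <= r i.
  rewrite /c; case: ifP => //; case: ifP => //; case: ifP => _ _ _; lia.
pose S := [set v | v \in take (c (part v)) (enum (partset part (part v)))].
have SX i : S :&: partset part i = [set v in take (c i) (enum (partset part i))].
  apply/setP => v; rewrite !inE /partset ?inE.
  case: (part v =P i) => [<-|ne].
    by rewrite andbT.
  rewrite andbF.
  apply/esym/negP => /mem_take; rewrite mem_enum inE => /eqP; exact: ne.
have sc i : #|S :&: partset part i| = c i by rewrite SX take_set_card.
have lc i : #|~: S :&: partset part i| = r i - c i.
  have := cnt_split _ _ part S i; rewrite sc /r; lia.
have HN : \sum_(i < k) r i = #|T|.
  by rewrite -cardsT -(sum_cnt _ _ part setT); apply: eq_bigr => i _; rewrite setTI.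
have HS : 2 * #|S| + 1 = #|T|.
  have HSs : \sum_(i < k) c i = #|S|.
    by rewrite -(sum_cnt _ _ part S); apply: eq_bigr => i _; rewrite sc.
  move: Heq; rewrite -cD /s_of !sum_if !card_if -HN -HSs.
  have E : \sum_(i < k) (c i * 2 + (if i \in A then r i else 0)
              + (if i \in S1 r :\: A then 1 else 0)
              + (if i \in D then 1 else 0) * 2)
         = \sum_(i < k) (r i + (if i \in A' then r i else 0) * 2).
    apply: eq_bigr => i _.
    have hD : i \in D -> (i \notin A) && ~~ odd (r i) by move/DE; rewrite !inE.
    have h1 : (i \in S1 r :\: A) = (i \notin A) && odd (r i) by rewrite !inE.
    rewrite h1 /c; move: hD (subsetP sA' i) (rpos i) (odd_double_half (r i)).
    case: (i \in A'); case: (i \in A); case: (i \in D);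
    case: (odd (r i)) => /=; lia.
  rewrite !big_split /= -!big_distrl /= in E.
  move: E.
  set X1 := \sum_(i < k) _; set X2 := \sum_(i < k) _; set X3 := \sum_(i < k) _.
  set X4 := \sum_(i < k) _; set X5 := \sum_(i < k) _; set X6 := \sum_(i < k) _.
  lia.
have HSc : #|~: S| = #|S| + 1 by have := cardsC S; lia.
exists (fun x y => (part x != part y) && ((x \in S) != (y \in S))), S.
split; [split; [|split; [|split; [|split]]]|].
- by move=> x y; rewrite [part x == _]eq_sym [(x \in S) == _]eq_sym.
- by move=> x y /andP [].
- by move=> x y /andP [].
- lia.
- lia.
- move=> v; rewrite degG /deg.
  set i := part v.
  have Ci := lc i; have Si := sc i.
  have Hc : c i = r i \/ (c i = 0 /\ i \notin A') \/
     (i \notin A /\ (((odd (r i)) /\ 2 * c i + 1 = r i) \/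
       (~~ odd (r i) /\ (2 * c i = r i \/ 2 * c i + 2 = r i)))).
    have hD : i \in D -> (i \notin A) && ~~ odd (r i) by move/DE; rewrite !inE.
    rewrite /c; move: hD (subsetP sA' i) (rpos i) (odd_double_half (r i)).
    case: (i \in A'); case: (i \in A); case: (i \in D);
    case: (odd (r i)) => /=; lia.
  case vS : (v \in S).
  + have -> : [set y | (i != part y) && (true != (y \in S))] =
              ~: S :\: partset part i.
      by apply/setP => y; rewrite !inE /partset ?inE eq_sym; case: (y \in S).
    rewrite cardD_cnt HSc Ci.
    have : 0 < #|S :&: partset part i|.
      by rewrite card_gt0; apply/set0Pn; exists v; by rewrite in_setI vS /partset inE; apply/eqP.
    rewrite Si /r; rewrite /r in Hc Ci. lia.
  + have -> : [set y | (i != part y) && (false != (y \in S))] =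
              S :\: partset part i.
      apply/setP => y; rewrite !inE /partset ?inE eq_sym. by case: (_ \in take _ _).
    rewrite cardD_cnt Si.
    have : 0 < #|~: S :&: partset part i|.
      by rewrite card_gt0; apply/set0Pn; exists v; rewrite in_setI in_setC vS /partset inE; apply/eqP.
    rewrite Ci /r; rewrite /r in Hc Si. lia.
Qed.

Theorem proposition3p3 (T : finType) (k : nat) (part : T -> 'I_k)
  (Hnonempty : forall i : 'I_k, exists v : T, part v = i)
  (Hodd : odd #|T|) :
  (exists (h : rel T) (V1 : {set T}), good_bisection (cmp_adj part) h V1) <->
  (exists A : {set 'I_k},
      good_subset (fun i : 'I_k => #|partset part i|) A).
Proof.
split; last by case=> A HA; exact: (bwd _ _ part Hnonempty A HA).
case=> h [V1 [[Hsym [Hg [Hc [Hs1 Hs2]]]] Hd]].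
have HC := cardsC V1.
case: (ltnP #|V1| #|~: V1|) => Hlt.
- apply: (fwd _ _ part V1 h) => //.
  move: Hodd; rewrite -HC => Ho.
  have : #|~: V1| = #|V1| + 1 by lia.
  lia.
- apply: (fwd _ _ part (~: V1) h) => //.
  + move: Hodd; rewrite -HC => Ho.
    have Hne : #|V1| <> #|~: V1|.
      by move=> E; move: Ho; rewrite E addnn odd_double.
    lia.
  + by move=> x y /Hc; rewrite !inE; case: (x \in V1); case: (y \in V1).
Qed.
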